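(* Let $p,q,K$ be parameters with $p\neq 0$, and let $a,b,c,d$ be generators of an associative algebra over $\mathbb{C}$ (extended by the parameters) subject to the relations $$ab=qba,\quad pac=ca,\quad ad=da+(q-p)bc,\quad pqbc=cb,\quad pbd=db,\quad cd=qdc.$$ Let $T=\begin{pmatrix} a&b\\ c&d\end{pmatrix}$ and $$\hat R(K;p,q)=\begin{pmatrix}1&0&0&0\\0&1-K&K/p&0\\0&Kq&1-Kq/p&0\\0&0&0&1\end{pmatrix},\qquad R=P\hat R(K;p,q).$$ Then for every value of $K$, $$R\,T_1T_2=T_2T_1\,R .$$
   Context: All $4\times4$ matrices are written in the ordered basis $e_1\otimes e_1,\ e_1\otimes e_2,\ e_2\otimes e_1,\ e_2\otimes e_2$ of $\mathbb{C}^2\otimes\mathbb{C}^2$, with double indices $(ij)$ ordered $11,12,21,22$. $P$ is the permutation (flip) matrix, i.e. the $4\times4$ matrix that swaps the second and third basis vectors. $T_1=T\otimes I_2$ and $T_2=I_2\otimes T$, so $T_1T_2$ has entries $(T_1T_2)_{(ij),(kl)}=T_{ik}T_{jl}$ and $T_2T_1$ has entries $(T_2T_1)_{(ij),(kl)}=T_{jl}T_{ik}$ (the entries of $T$ do not commute, so the order of factors matters). The equality $RT_1T_2=T_2T_1R$ is an equality of $4\times 4$ matrices with entries in the algebra. *)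

(* Defs.v *)
From HB Require Import structures.
From mathcomp Require Import all_boot all_order all_algebra.
Set Implicit Arguments. Unset Strict Implicit. Unset Printing Implicit Defensive.
Import GRing.Theory.
Local Open Scope ring_scope.

(* Basis index (ij) in 'I_4 ordered 11,12,21,22: index x encodes (x/2, x%2). *)
Definition fstI (x : 'I_4) : 'I_2 := inord (x %/ 2).
Definition sndI (x : 'I_4) : 'I_2 := inord (x %% 2).

(* T1 = T (x) I_2 *)
Definition tens1 (A : pzRingType) (T : 'M[A]_2) : 'M[A]_4 :=
  \matrix_(x, y) (if sndI x == sndI y then T (fstI x) (fstI y) else 0).
(* T2 = I_2 (x) T *)
Definition tens2 (A : pzRingType) (T : 'M[A]_2) : 'M[A]_4 :=
  \matrix_(x, y) (if fstI x == fstI y then T (sndI x) (sndI y) else 0).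

Definition Tmat (A : pzRingType) (a b c d : A) : 'M[A]_2 :=
  \matrix_(i, j) (if i == 0 then (if j == 0 then a else b)
                  else (if j == 0 then c else d)).

(* Flip matrix P: swaps second and third basis vectors *)
Definition flipP (A : pzRingType) : 'M[A]_4 :=
  \matrix_(x, y) (if (fstI x == sndI y) && (sndI x == fstI y) then 1 else 0).

Definition mx4 (A : pzRingType) (l : seq (seq A)) : 'M[A]_4 :=
  \matrix_(i, j) nth 0 (nth [::] l i) j.

Definition Rhat (F : fieldType) (A : algType F) (K p q : F) : 'M[A]_4 :=
  mx4 [:: [:: 1; 0; 0; 0];
          [:: 0; (1 - K)%:A; (K / p)%:A; 0];
          [:: 0; (K * q)%:A; (1 - K * q / p)%:A; 0];
          [:: 0; 0; 0; 1]].

Definition Rmat (F : fieldType) (A : algType F) (K p q : F) : 'M[A]_4 :=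
  flipP A *m Rhat A K p q.

(* Main.v *)
Require Import Defs.
From HB Require Import structures.
From mathcomp Require Import all_boot all_order all_algebra.
From mathcomp Require Import ring.
Import GRing.Theory.
Local Open Scope ring_scope.
Lemma inord_eq0 k : (k < 2)%N -> ((inord k : 'I_2) == 0) = (k == 0)%N.
Proof. by move=> hk; rewrite -val_eqE /= inordK. Qed.
Lemma inord_eq k l : (k < 2)%N -> (l < 2)%N -> ((inord k : 'I_2) == inord l) = (k == l)%N.
Proof. by move=> hk hl; rewrite -val_eqE /= !inordK. Qed.

Theorem mainTheorem1 (F : fieldType) (A : algType F) (p q : F) (a b c d : A) :
  p != 0 ->
  a * b = q *: (b * a) ->
  p *: (a * c) = c * a ->
  a * d = d * a + (q - p) *: (b * c) ->
  (p * q) *: (b * c) = c * b ->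
  p *: (b * d) = d * b ->
  c * d = q *: (d * c) ->
  forall K : F,
    Rmat A K p q *m (tens1 (Tmat a b c d) *m tens2 (Tmat a b c d))
    = (tens2 (Tmat a b c d) *m tens1 (Tmat a b c d)) *m Rmat A K p q.
Proof.
move=> p0 hab hca had hcb hdb hcd K.
apply/matrixP => i j.
rewrite /Rmat /Rhat /mx4 /flipP /tens1 /tens2 /Tmat.
rewrite !mxE !big_ord_recr big_ord0 /= !mxE.
rewrite !big_ord_recr !big_ord0 /= !mxE.
case: i => [[|[|[|[|i]]]] Hi] //; case: j => [[|[|[|[|j]]]] Hj] //.
all: rewrite /fstI /sndI !inord_eq0 // ?inord_eq //=.
all: rewrite ?(mul0r, mulr0, mul1r, mulr1, add0r, addr0, mulr_algl, mulr_algr).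
all: rewrite -?hca -?hcb -?hdb ?hab ?had ?hcd ?scalerDr ?scalerA //.
- by rewrite -scalerDl; congr (_ *: _); ring.
- by rewrite -scalerDl -[LHS]scale1r; congr (_ *: _); field.
- by rewrite -scalerDl; congr (_ *: _); field.
- by rewrite -addrA -scalerDl; congr (_ + _ *: _); field.
- by rewrite addrC; congr (_ + _ *: _); field.
- by rewrite -scalerDl; congr (_ *: _); field.
- by rewrite -scalerDl -[RHS]scale1r; congr (_ *: _); field.
- by rewrite addrCA -scalerDl -addrA -scalerDl; congr (_ + _ *: _); field.
- by rewrite addrCA -scalerDl addrC; congr (_ + _ *: _); field.
- by rewrite -scalerDl -[RHS]scale1r; congr (_ *: _); field.
- by rewrite -scalerDl; congr (_ *: _); ring.
- by rewrite -scalerDl -[LHS]scale1r; congr (_ *: _); field.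
Qed.
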